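(* Let $p\geq 5$ be a prime, let $G=\mathbb{S}_{2p}$ or $\mathbb{A}_{2p}$, and let $\mathcal{C}$ be a conjugacy class of non-trivial $p$-elements of $G$. Then $K_{\mathcal{C}}$ is irreducible.
   Context: For a finite group $G$ and a subset $\mathcal{C}\subseteq G\setminus\{1\}$ closed under conjugation, the Killing form $K_{\mathcal{C}}$ is the bilinear form on the complex vector space with basis $\mathcal{C}$ given on basis elements by $K_{\mathcal{C}}(a,b)=|C_G(ab)\cap\mathcal{C}|$. $K_{\mathcal{C}}$ is irreducible if the graph with vertex set $\mathcal{C}$, in which distinct $a,b$ are adjacent iff $C_G(ab)\cap\mathcal{C}\neq\emptyset$, is connected, and reducible otherwise. *)

(* Defs.v *)
From mathcomp Require Import all_boot all_fingroup all_solvable.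
Set Implicit Arguments. Unset Strict Implicit. Unset Printing Implicit Defensive.
Local Open Scope group_scope.

(* Commuting graph of the Killing form K_C: vertices are the elements of C,
   distinct a, b adjacent iff C_G(ab) meets C. *)
Definition killing_rel (gT : finGroupType) (G C : {set gT}) : rel gT :=
  fun a b => [&& a \in C, b \in C, a != b & 'C_G[a * b] :&: C != set0].

(* K_C is irreducible iff that graph is connected. *)
Definition killing_irreducible (gT : finGroupType) (G C : {set gT}) : Prop :=
  forall a b, a \in C -> b \in C -> connect (killing_rel G C) a b.

(* Main.v *)
Require Import Defs.
From mathcomp Require Import all_boot all_fingroup all_solvable.
From mathcomp Require Import zify.
Set Implicit Arguments. Unset Strict Implicit. Unset Printing Implicit Defensive.
Local Open Scope group_scope.

Ltac arith := rewrite ?eqE /=;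
  repeat match goal with
  | |- context [if ?c then _ else _] =>
      lazymatch c with context [if _ then _ else _] => fail | _ =>
      let E := fresh "E" in case E: c; try (move=> *; exfalso; lia) end
  end; move=> *; lia.

Definition natf (p : nat) (f : nat -> nat) (i : 'I_(p.*2)) : 'I_(p.*2) :=
  insubd i (f i).

Lemma natfE p (f : nat -> nat) (i : 'I_(p.*2)) : f i < p.*2 -> val (natf f i) = f i.
Proof. by move=> h; rewrite /natf val_insubd h. Qed.

Lemma natf_inj p (f : nat -> nat) :
  (forall m, m < p.*2 -> f m < p.*2) ->
  (forall m m', m < p.*2 -> m' < p.*2 -> f m = f m' -> m = m') ->
  injective (natf (p:=p) f).
Proof.
move=> hb hi i j /(congr1 val); rewrite !natfE ?hb // => e.
by apply: val_inj; exact: hi (ltn_ord i) (ltn_ord j) e.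
Qed.


Definition fx0 p m := if m < p then (if m.+1 == p then 0 else m.+1) else m.
Definition fb0 p m := if p <= m then (if m.+1 == p.*2 then p else m.+1) else m.
Definition fr p m := if m < p then (if m == 0 then 0 else p - m) else m.
Definition fk2 p m := if m < p then m.*2 else (m - p).*2.+1.
Definition fK p j m := if (m < j) && (m < p) then m + p
   else if (p <= m) && (m < p + j) then m - p else m.

Lemma inj_x0 p : injective (natf (p:=p) (fx0 p)).
Proof. apply: natf_inj => [m|m m']; rewrite /fx0; arith. Qed.
Lemma inj_b0 p : injective (natf (p:=p) (fb0 p)).
Proof. apply: natf_inj => [m|m m']; rewrite /fb0; arith. Qed.
Lemma inj_r p : injective (natf (p:=p) (fr p)).
Proof. apply: natf_inj => [m|m m']; rewrite /fr; arith. Qed.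
Lemma inj_k2 p : injective (natf (p:=p) (fk2 p)).
Proof. apply: natf_inj => [m|m m']; rewrite /fk2; arith. Qed.
Lemma inj_K p j : injective (natf (p:=p) (fK p j)).
Proof. apply: natf_inj => [m|m m']; rewrite /fK; arith. Qed.

Definition x0 p : {perm 'I_(p.*2)} := perm (@inj_x0 p).
Definition b0 p : {perm 'I_(p.*2)} := perm (@inj_b0 p).
Definition x1 p : {perm 'I_(p.*2)} := x0 p * b0 p.
Definition rr p : {perm 'I_(p.*2)} := perm (@inj_r p).
Definition k2 p : {perm 'I_(p.*2)} := perm (@inj_k2 p).
Definition KK p j : {perm 'I_(p.*2)} := perm (@inj_K p j).

Lemma x0E p i : val (x0 p i) = fx0 p i.
Proof. rewrite permE natfE //; have := ltn_ord i; rewrite /fx0; arith. Qed.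
Lemma b0E p i : val (b0 p i) = fb0 p i.
Proof. rewrite permE natfE //; have := ltn_ord i; rewrite /fb0; arith. Qed.
Lemma rrE p i : val (rr p i) = fr p i.
Proof. rewrite permE natfE //; have := ltn_ord i; rewrite /fr; arith. Qed.
Lemma k2E p i : val (k2 p i) = fk2 p i.
Proof. rewrite permE natfE //; have := ltn_ord i; rewrite /fk2; arith. Qed.
Lemma KKE p j i : val (KK p j i) = fK p j i.
Proof. rewrite permE natfE //; have := ltn_ord i; rewrite /fK; arith. Qed.

Lemma tpermv n (a b c : 'I_n) :
  val (tperm a b c) = if val c == val a then val b else if val c == val b then val a else val c.
Proof.
case: tpermP => [->|->|/eqP nca /eqP ncb]; rewrite ?eqxx //.
- by case: eqP => // /val_inj ->.
- by rewrite val_eqE (negbTE nca) val_eqE (negbTE ncb).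
Qed.

Lemma x1E p i : val (x1 p i) = fb0 p (fx0 p i).
Proof. by rewrite permM b0E x0E. Qed.


Ltac pw := apply/permP => i; apply: val_inj; have := ltn_ord i;
  rewrite ?permM /=;
  repeat progress rewrite ?x0E ?b0E ?x1E ?rrE ?k2E ?KKE ?tpermv ?val_insubd;
  rewrite /fx0 /fb0 /fr /fk2 /fK.

Lemma x0b0C p : x0 p * b0 p = b0 p * x0 p.
Proof. pw; arith. Qed.

Lemma x0rx0 p : x0 p * rr p * x0 p = rr p.
Proof. pw; arith. Qed.

Lemma x1KC p : x1 p * KK p p = KK p p * x1 p.
Proof. rewrite /x1; pw; arith. Qed.

Lemma x0tC p (i0 : 'I_(p.*2)) : 0 < p ->
  x0 p * tperm (insubd i0 p) (insubd i0 p.+1) = tperm (insubd i0 p) (insubd i0 p.+1) * x0 p.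
Proof. move=> hp; pw; arith. Qed.

Lemma k2z p (i0 : 'I_(p.*2)) : 5 <= p ->
  let t := tperm (insubd i0 0) (insubd i0 p) in
  k2 p * (x1 p * (t * x1 p * t)) = x1 p * k2 p.
Proof. move=> hp t; rewrite /t /x1; pw; arith. Qed.

Lemma KKstep p j (i0 : 'I_(p.*2)) : j < p ->
  KK p j.+1 = KK p j * tperm (insubd i0 j) (insubd i0 (j + p)).
Proof. move=> hj; pw; arith. Qed.

Lemma KK0 p : KK p 0 = 1.
Proof. pw; rewrite perm1; arith. Qed.

Lemma kr_conjP (gT : finGroupType) (G : {group gT}) (C : {set gT}) (k : gT) a b :
  killing_rel G C a b -> killing_rel (G :^ k) (C :^ k) (a ^ k) (b ^ k).
Proof.
case/and4P=> aC bC nab ne; apply/and4P; split; rewrite ?memJ_conjg //.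
  by rewrite (inj_eq (@conjg_inj _ k)).
case/set0Pn: ne => c /setIP[/setIP[cG cab] cC]; apply/set0Pn; exists (c ^ k).
apply/setIP; split; [apply/setIP; split|]; rewrite ?memJ_conjg //.
by rewrite -conjMg cent1J memJ_conjg.
Qed.

Lemma kr_connJ (gT : finGroupType) (G : {group gT}) (C : {set gT}) (k : gT) a b :
  connect (killing_rel G C) a b ->
  connect (killing_rel (G :^ k) (C :^ k)) (a ^ k) (b ^ k).
Proof.
case/connectP=> s; elim: s a => [|y s IH] a /=; first by move=> _ ->.
case/andP=> Ray Ps Eb; apply: connect_trans (IH _ Ps Eb).
exact: connect1 (kr_conjP k Ray).
Qed.

Lemma kr_sym (gT : finGroupType) (G : {group gT}) (C : {set gT}) :
  (forall g, g \in G -> C :^ g = C) -> C \subset G ->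
  symmetric (killing_rel G C).
Proof.
move=> CJ sCG.
suff H a b : killing_rel G C a b -> killing_rel G C b a.
  by move=> a b; apply/idP/idP; apply: H.
move=> Rab; have /and4P[aC bC nab _] := Rab.
have aG : a \in G by apply: (subsetP sCG).
have := kr_conjP a Rab; rewrite (conjGid aG) (CJ a aG).
case/and4P=> _ _ _ ne; apply/and4P; split => //; first by rewrite eq_sym.
suff -> : b * a = a ^ a * b ^ a by [].
by rewrite !conjgE mulKg mulKVg.
Qed.

Lemma H_gs (gT : finGroupType) (G : {group gT}) (C : {set gT}) x :
  (forall k, G :^ k = G) -> (forall k, C :^ k = C) ->
  group_set [set g | connect (killing_rel G C) x (x ^ g)].
Proof.
move=> GJ CJ; apply/group_setP; split; first by rewrite inE conjg1 connect0.
move=> g h; rewrite !inE => xg xh; rewrite conjgM.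
apply: connect_trans xh _.
by have := kr_connJ h xg; rewrite GJ CJ.
Qed.

Lemma irred_of_all (gT : finGroupType) (G : {group gT}) (C : {set gT}) x :
  (forall a, a \in C -> exists g, a = x ^ g) ->
  symmetric (killing_rel G C) ->
  (forall g, connect (killing_rel G C) x (x ^ g)) -> killing_irreducible G C.
Proof.
move=> Cx sym all a b aC bC.
have [g ->] := Cx a aC; have [h ->] := Cx b bC.
apply: connect_trans (all h); rewrite (sym_connect_sym sym); exact: all.
Qed.

Lemma irred_conj (gT : finGroupType) (G : {group gT}) (C : {set gT}) k :
  killing_irreducible G C -> killing_irreducible (G :^ k) (C :^ k).
Proof.
move=> irr a b aC bC.
have aC' : a ^ k^-1 \in C by rewrite -(memJ_conjg _ k) conjgKV.
have bC' : b ^ k^-1 \in C by rewrite -(memJ_conjg _ k) conjgKV.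
by have := kr_connJ k (irr _ _ aC' bC'); rewrite !conjgKV.
Qed.

Lemma supp_commute (T : finType) (c z : {perm T}) (M : pred T) :
  (forall i, ~~ M i -> z i = i) -> (forall i, M i -> c i = i) -> commute c z.
Proof.
move=> zM cM; apply/permP => i; rewrite !permM.
case: (boolP (M i)) => Mi.
  rewrite cM //; case: (boolP (M (z i))) => Mzi; first by rewrite cM.
  have e := zM _ Mzi; have := congr1 (z^-1) e; rewrite !permK => ezi.
  by move: Mzi; rewrite ezi Mi.
rewrite (zM i Mi); case: (boolP (M (c i))) => Mci; last by rewrite zM.
have e := cM _ Mci; have := congr1 (c^-1) e; rewrite !permK => eci.
by move: Mci; rewrite eci (negbTE Mi).
Qed.


Lemma x0X0 p (i0 : 'I_(p.*2)) m : m < p -> val ((x0 p ^+ m) (insubd i0 0)) = m.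
Proof.
move=> hm; elim: m hm => [|m IH] hm; first by rewrite expg0 perm1 val_insubd; arith.
by rewrite expgSr permM x0E IH; [rewrite /fx0; arith | lia].
Qed.

Lemma x0Xp p (i0 : 'I_(p.*2)) m : 0 < p -> val ((x0 p ^+ m) (insubd i0 p)) = p.
Proof.
move=> hp; elim: m => [|m IH]; first by rewrite expg0 perm1 val_insubd; arith.
by rewrite expgSr permM x0E IH /fx0; arith.
Qed.

Lemma b0X0 p (i0 : 'I_(p.*2)) m : 0 < p -> val ((b0 p ^+ m) (insubd i0 0)) = 0.
Proof.
move=> hp; elim: m => [|m IH]; first by rewrite expg0 perm1 val_insubd; arith.
by rewrite expgSr permM b0E IH /fb0; arith.
Qed.

Lemma b0Xp p (i0 : 'I_(p.*2)) m : m < p -> val ((b0 p ^+ m) (insubd i0 p)) = p + m.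
Proof.
move=> hm; elim: m hm => [|m IH] hm; first by rewrite expg0 perm1 val_insubd; arith.
by rewrite expgSr permM b0E IH; [rewrite /fb0; arith | lia].
Qed.

Lemma gen_canon p (H : {group {perm 'I_(p.*2)}}) (i0 : 'I_(p.*2)) : 0 < p ->
  x0 p \in H -> b0 p \in H -> tperm (insubd i0 0) (insubd i0 p) \in H ->
  forall g, g \in H.
Proof.
move=> hp xH bH tH g.
suff: [set: {perm 'I_(p.*2)}] \subset H by move/subsetP; apply; rewrite inE.
rewrite -(gen_tperm (insubd i0 0)) gen_subG; apply/subsetP => s /imsetP[y _ ->].
have o0 : val (insubd i0 0 : 'I_(p.*2)) = 0 by rewrite val_insubd; arith.
have op : val (insubd i0 p : 'I_(p.*2)) = p by rewrite val_insubd; arith.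
case: (ltnP y p) => hy.
  have e1 : tperm (insubd i0 0) (insubd i0 p) ^ (x0 p ^+ y) = tperm y (insubd i0 p).
    rewrite tpermJ; congr tperm; apply: val_inj; by rewrite ?x0X0 ?x0Xp.
  have tyH : tperm y (insubd i0 p) \in H by rewrite -e1 groupJ // groupX.
  case: (eqVneq y (insubd i0 0)) => [->|ny]; first by rewrite tperm1 group1.
  have e2 : tperm (insubd i0 0) (insubd i0 p) ^ tperm y (insubd i0 p) = tperm (insubd i0 0) y.
    rewrite tpermJ tpermR tpermD //; rewrite -val_eqE /= o0 op; lia.
  by rewrite -e2 groupJ.
have e1 : tperm (insubd i0 0) (insubd i0 p) ^ (b0 p ^+ (y - p)) = tperm (insubd i0 0) y.
  rewrite tpermJ; congr tperm; apply: val_inj; rewrite ?b0X0 ?b0Xp //=; have := ltn_ord y; lia.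
by rewrite -e1 groupJ // groupX.
Qed.


Lemma GJ_lem p (G : {group {perm 'I_(p.*2)}}) :
  (G :=: Sym 'I_(p.*2) \/ G :=: Alt 'I_(p.*2)) -> forall k, G :^ k = G.
Proof.
move=> hG k; apply/normP; case: hG => ->; first by rewrite /Sym normT inE.
by apply: (subsetP (Alt_norm _)); rewrite /Sym inE.
Qed.

Lemma KK_odd p j : j <= p -> odd_perm (KK p j) = odd j.
Proof.
elim: j => [|j IH] hj; first by rewrite KK0 odd_perm1.
have i0 : 'I_(p.*2) by exists 0; lia.
rewrite (KKstep i0) ?odd_permM ?IH ?odd_tperm; try lia.
have -> : (insubd i0 j != insubd i0 (j + p) :> 'I_(p.*2)) = true.
  by rewrite -val_eqE /= !val_insubd; arith.
by rewrite addbT.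
Qed.

Lemma conj_fix_comm (gT : finGroupType) (x u : gT) : x * u = u * x -> x ^ u = x.
Proof. by move=> e; rewrite conjgE e mulKg. Qed.

Lemma class_all p (G : {group {perm 'I_(p.*2)}}) (xc u : {perm 'I_(p.*2)}) :
  (G :=: Sym 'I_(p.*2) \/ G :=: Alt 'I_(p.*2)) -> odd_perm u -> xc ^ u = xc ->
  forall g, xc ^ g \in xc ^: G.
Proof.
move=> hG ou xu g; case: hG => hG.
  by apply: memJ_class; rewrite hG /Sym inE.
case: (boolP (odd_perm g)) => og.
  have -> : xc ^ g = xc ^ (u * g) by rewrite conjgM xu.
  by apply: memJ_class; rewrite hG Alt_even odd_permM ou og.
by apply: memJ_class; rewrite hG Alt_even.
Qed.

Lemma canon_frame p (G : {group {perm 'I_(p.*2)}}) (xc u : {perm 'I_(p.*2)})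
    (i0 : 'I_(p.*2)) :
  0 < p -> (G :=: Sym 'I_(p.*2) \/ G :=: Alt 'I_(p.*2)) -> xc \in G ->
  odd_perm u -> xc ^ u = xc -> xc ^ x0 p = xc -> xc ^ b0 p = xc ->
  (forall HG : {group {perm 'I_(p.*2)}},
     HG :=: [set g | connect (killing_rel G (xc ^: G)) xc (xc ^ g)] ->
     tperm (insubd i0 0) (insubd i0 p) \in HG) ->
  killing_irreducible G (xc ^: G).
Proof.
move=> hp hG xcG ou xu x0c b0c tH.
have GJ := GJ_lem hG.
have CA := class_all hG ou xu.
have CJ : forall k, (xc ^: G) :^ k = xc ^: G.
  move=> k; apply/setP => y; rewrite mem_conjg; apply/idP/idP.
    case/imsetP => g _ /(congr1 (conjg^~ k)); rewrite conjgKV -conjgM => ->.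
    exact: CA.
  case/imsetP => g _ ->; rewrite -conjgM; exact: CA.
have CsubG : xc ^: G \subset G by apply: class_subG.
have sym := kr_sym (fun g _ => CJ g) CsubG.
pose HG := Group (H_gs xc GJ CJ).
have fixH : forall g, xc ^ g = xc -> g \in HG.
  by move=> g e; rewrite inE e connect0.
have all := gen_canon hp (fixH _ x0c) (fixH _ b0c) (tH HG (erefl _)).
apply: irred_of_all sym _.
  by move=> a /imsetP[g _ ->]; exists g.
by move=> g; have := all g; rewrite inE.
Qed.


Ltac vals := rewrite ?permM /=;
  repeat progress rewrite ?x0E ?b0E ?x1E ?rrE ?k2E ?KKE ?tpermv ?val_insubd;
  rewrite /fx0 /fb0 /fr /fk2 /fK.

Lemma prime_odd5 p : prime p -> 5 <= p -> odd p.
Proof. by move=> pp hp; case: (even_prime pp) => // e; rewrite e in hp. Qed.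

Lemma canon2 p (G : {group {perm 'I_(p.*2)}}) (i0 : 'I_(p.*2)) :
  prime p -> 5 <= p -> (G :=: Sym 'I_(p.*2) \/ G :=: Alt 'I_(p.*2)) ->
  x1 p \in G -> killing_irreducible G (x1 p ^: G).
Proof.
move=> pp hp hG xG.
have oK : odd_perm (KK p p) by rewrite KK_odd // prime_odd5.
have xK : x1 p ^ KK p p = x1 p by apply: conj_fix_comm; apply: x1KC.
apply: (canon_frame (i0:=i0) _ hG xG oK xK); first lia.
- apply: conj_fix_comm; rewrite /x1 -mulgA -x0b0C; done.
- by apply: conj_fix_comm; rewrite /x1 mulgA -x0b0C.
move=> HG ->; rewrite inE; apply: connect1.
set t := tperm _ _.
have CA := class_all hG oK xK.
have CsubG : x1 p ^: G \subset G by apply: class_subG.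
apply/and4P; split; rewrite ?class_refl ?CA //.
  apply/eqP => /(congr1 (fun s : {perm 'I_(p.*2)} => val (s (insubd i0 p)))).
  rewrite conjgE /t tpermV; vals; arith.
have ez : x1 p * x1 p ^ t = x1 p ^ k2 p.
  rewrite !conjgE -(k2z i0 hp) mulKg /t tpermV !mulgA //.
apply/set0Pn; exists (x1 p * x1 p ^ t).
apply/setIP; split; [apply/setIP; split|]; rewrite ?cent1id // ez ?CA //.
by apply: (subsetP CsubG); exact: CA.
Qed.


Definition fxi p m := if m < p then (if m == 0 then p.-1 else m.-1) else m.

Lemma x0VE p i : val ((x0 p)^-1 i) = fxi p i.
Proof.
rewrite -{2}(permKV (x0 p) i) x0E; have := ltn_ord ((x0 p)^-1 i).
rewrite /fxi /fx0; arith.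
Qed.

Ltac vals2 := rewrite ?permM /=;
  repeat progress rewrite ?x0E ?b0E ?x1E ?rrE ?k2E ?KKE ?x0VE ?tpermv ?val_insubd;
  rewrite /fx0 /fb0 /fr /fk2 /fK /fxi.

Lemma x0rr p : x0 p ^ rr p = (x0 p)^-1.
Proof.
have e := x0rx0 p.
have e2 : x0 p * rr p = rr p * (x0 p)^-1 by rewrite -{2}e mulgK.
by rewrite conjgE e2 mulKg.
Qed.

Lemma canon1 p (G : {group {perm 'I_(p.*2)}}) (i0 : 'I_(p.*2)) :
  prime p -> 5 <= p -> (G :=: Sym 'I_(p.*2) \/ G :=: Alt 'I_(p.*2)) ->
  x0 p \in G -> killing_irreducible G (x0 p ^: G).
Proof.
move=> pp hp hG xG.
set u := tperm (insubd i0 p) (insubd i0 p.+1).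
have ou : odd_perm u.
  rewrite odd_tperm -val_eqE /=; vals2; arith.
have xu : x0 p ^ u = x0 p by apply: conj_fix_comm; apply: x0tC; lia.
apply: (canon_frame (i0:=i0) _ hG xG ou xu); first lia.
- by apply: conj_fix_comm.
- by apply: conj_fix_comm; apply: x0b0C.
move=> HG eH.
set t := tperm _ _.
have CA := class_all hG ou xu.
have CsubG : x0 p ^: G \subset G by apply: class_subG.
have rH : rr p \in HG.
  rewrite eH inE; apply: connect1; rewrite x0rr.
  apply/and4P; split; rewrite ?class_refl -?x0rr ?CA // ?x0rr.
    apply/eqP => e; have : x0 p * x0 p = 1 by rewrite {2}e mulgV.
    move/(congr1 (fun s : {perm 'I_(p.*2)} => val (s (insubd i0 0)))).
    rewrite perm1; vals2; arith.
  apply/set0Pn; exists (x0 p); rewrite mulgV.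
  apply/setIP; split; [apply/setIP; split|]; rewrite ?class_refl //.
  by rewrite cent11T inE.
have rtH : rr p * t \in HG.
  rewrite eH inE; apply: connect1; rewrite conjgM x0rr.
  apply/and4P; split; rewrite ?class_refl -?x0rr -?conjgM ?CA // ?conjgM ?x0rr.
    apply/eqP => /(congr1 (fun s : {perm 'I_(p.*2)} => val (s (insubd i0 p)))).
    rewrite conjgE /t tpermV; vals2; arith.
  set k1 := tperm (insubd i0 0) (insubd i0 p.+1) * tperm (insubd i0 p.-1) (insubd i0 p.+2).
  apply/set0Pn; exists (x0 p ^ k1).
  apply/setIP; split; [apply/setIP; split|]; rewrite ?CA //.
    by apply: (subsetP CsubG); exact: CA.
  apply/cent1P.
  apply: (@supp_commute _ _ _ (fun i => (val i == 0) || (val i == p.-1) || (val i == p))).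
    move=> i; rewrite -!/(is_true _) => hi; apply: val_inj; move: hi.
    have := ltn_ord i; rewrite conjgE /t tpermV; vals2; arith.
  move=> i hi; apply: val_inj; move: hi.
  have := ltn_ord i; rewrite conjgE /k1 invMg !tpermV; vals2; arith.
by rewrite -(mulKg (rr p) t) groupM ?groupV.
Qed.


Lemma fix_mul (T : finType) (x : {perm T}) j a m :
  (x ^+ a) j = j -> (x ^+ (a * m)) j = j.
Proof. by move=> h; rewrite expgnA permX_fix. Qed.

Lemma fix_gcd (T : finType) (x : {perm T}) j a b :
  (0 < a)%N -> (x ^+ a) j = j -> (x ^+ b) j = j -> (x ^+ gcdn a b) j = j.
Proof.
move=> a0 ha hb; have [k _ /dvdnP[q eq]] := Bezoutl b a0.
have h1 : (x ^+ (k * b + gcdn a b)) j = j by rewrite addnC eq mulnC fix_mul.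
by move: h1; rewrite expgnDr permM mulnC fix_mul.
Qed.

Lemma fix_diff (T : finType) (x : {perm T}) j i k :
  (i <= k)%N -> (x ^+ i) j = (x ^+ k) j -> (x ^+ (k - i)) j = j.
Proof.
move=> hik e; apply: (@perm_inj _ (x ^+ i)).
by rewrite -permM -expgnDr subnK // e.
Qed.

Lemma xp1 p (x : {perm 'I_(p.*2)}) : prime p -> (5 <= p)%N -> p.-elt x -> x ^+ p = 1.
Proof.
move=> pp hp pel; have [e he] := p_natP pel.
apply/permP => j; rewrite perm1.
pose f := fun m : 'I_(p.*2).+1 => (x ^+ m) j.
have : ~~ injectiveb f.
  apply/negP => /injectiveP/leq_card; rewrite !card_ord; lia.
case/injectivePn => i1 [i2 ne12 e12].
have [d [d0 d2 hd]] : exists d, [/\ (0 < d)%N, (d <= p.*2)%N & (x ^+ d) j = j].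
  case: (ltngtP i1 i2) => h.
  - exists (i2 - i1); split; [lia | have := ltn_ord i2; lia | exact: fix_diff (ltnW h) e12].
  - exists (i1 - i2); split; [lia | have := ltn_ord i1; lia | exact: fix_diff (ltnW h) (esym e12)].
  - by move: ne12; rewrite -val_eqE /= h eqxx.
have hb : (x ^+ #[x]) j = j by rewrite expg_order perm1.
have hg := fix_gcd d0 hd hb.
have gd : (gcdn d #[x] <= d)%N by apply: dvdn_leq d0 (dvdn_gcdl _ _).
have : (gcdn d #[x] %| p ^ e)%N by rewrite -he dvdn_gcdr.
case/(dvdn_pfactor _ _ pp) => ff _ gf.
have gp : (gcdn d #[x] %| p)%N.
  rewrite gf; case: ff gf => [|[|ff]] gf; rewrite ?expn0 ?expn1 ?dvd1n ?dvdnn //.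
  exfalso; move: gd; rewrite gf !expnS.
  have : (0 < p ^ ff)%N by rewrite expn_gt0; lia.
  move: (p ^ ff)%N => P P0; nia.
by have := fix_mul (p %/ gcdn d #[x]) hg; rewrite mulnC divnK.
Qed.

Lemma orb_inj (T : finType) p (x : {perm T}) a i j : prime p -> x ^+ p = 1 ->
  x a != a -> (i < p)%N -> (j < p)%N -> (x ^+ i) a = (x ^+ j) a -> i = j.
Proof.
move=> pp xp xa.
wlog hij : i j / (i <= j)%N.
  move=> H hi hj e; case: (leqP i j) => h; first exact: H.
  by apply/esym; apply: H; rewrite ?e //; lia.
move=> hi hj e; have hd := fix_diff hij e.
case: (posnP (j - i)) => h0; first lia.
have hp : (x ^+ p) a = a by rewrite xp perm1.
have := fix_gcd h0 hd hp.
have -> : gcdn (j - i) p = 1%N.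
  apply/eqP; rewrite gcdnC -/(coprime p (j - i)) prime_coprime //.
  by apply/negP => /(dvdn_leq h0); lia.
by rewrite expg1 => /eqP; rewrite (negbTE xa).
Qed.

Lemma orb_back (T : finType) p (x : {perm T}) a b i j : x ^+ p = 1 -> (j <= p)%N ->
  (x ^+ i) a = (x ^+ j) b -> b = (x ^+ (i + (p - j))) a.
Proof.
move=> xp hj e; rewrite expgnDr permM e -permM -expgnDr subnKC //.
by rewrite xp perm1.
Qed.

Lemma classify p (x : {perm 'I_(p.*2)}) : prime p -> (5 <= p)%N -> x ^+ p = 1 ->
  x != 1 -> exists k, x = x0 p ^ k \/ x = x1 p ^ k.
Proof.
move=> pp hp xp xn1.
have p0 : (0 < p)%N by lia.
have [a xa] : exists a, x a != a.
  case: (pickP (fun a => x a != a)) => [a h|h]; first by exists a.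
  move/eqP: xn1 => []; apply/permP => a; rewrite perm1.
  by move: (h a) => /negbFE/eqP.
have step : forall c m, (x ^+ m.+1) c = x ((x ^+ m) c).
  by move=> c m; rewrite expgSr permM.
have xpc : forall c, (x ^+ p) c = c by move=> c; rewrite xp perm1.
pose O := [set (x ^+ (val i)) a | i : 'I_p].
have memO : forall m, (x ^+ m) a \in O.
  move=> m; rewrite -(expg_mod _ xp); apply/imsetP.
  by exists (Ordinal (ltn_pmod m p0)).
have cO : #|O| = p.
  rewrite card_imset ?card_ord // => i j e; apply/val_inj.
  exact: orb_inj pp xp xa (ltn_ord i) (ltn_ord j) e.
case: (pickP (fun b => (b \notin O) && (x b != b))) => [b /andP[bO xb] | hfix].
- pose kf := fun m : 'I_(p.*2) => if (m < p)%N then (x ^+ m) a else (x ^+ (m - p)) b.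
  have kinj : injective kf.
    move=> m1 m2; rewrite /kf; case: ifP => h1; case: ifP => h2 e; apply: val_inj => /=.
    + exact: orb_inj pp xp xa h1 h2 e.
    + exfalso; move: bO; rewrite (orb_back xp _ e) ?memO //; have := ltn_ord m2; lia.
    + exfalso; move: bO; rewrite (orb_back xp _ (esym e)) ?memO //; have := ltn_ord m1; lia.
    + have h1' : (m1 - p < p)%N by have := ltn_ord m1; lia.
      have h2' : (m2 - p < p)%N by have := ltn_ord m2; lia.
      have := orb_inj pp xp xb h1' h2' e; lia.
  pose k := perm kinj.
  exists k; right.
  suff e : k * x = x1 p * k by rewrite conjgE -e mulKg.
  apply/permP => m; rewrite !permM !(@permE _ kf kinj) /kf /=.
  have hv : nat_of_ord (b0 p (x0 p m)) = fb0 p (fx0 p m) by rewrite b0E x0E.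
  have hm2 := ltn_ord m; rewrite /fb0 /fx0 in hv.
  case: (ltnP m p) => hm; case: (eqVneq m.+1 p) => hm1.
  + have hx : nat_of_ord (b0 p (x0 p m)) = 0 by rewrite [LHS]hv; arith.
    by rewrite hx p0 expg0 perm1 -step hm1 xpc.
  + have hx : nat_of_ord (b0 p (x0 p m)) = m.+1 by rewrite [LHS]hv; arith.
    by rewrite hx step; have -> : (m.+1 < p)%N by lia.
  + lia.
  + case: (eqVneq m.+1 p.*2) => hm3.
    * have hx : nat_of_ord (b0 p (x0 p m)) = p by rewrite [LHS]hv; arith.
      rewrite hx ltnn subnn expg0 perm1 -step.
      by have -> : (m - p).+1 = p by lia.
    * have hx : nat_of_ord (b0 p (x0 p m)) = m.+1 by rewrite [LHS]hv; arith.
      rewrite hx -step; have -> : (m.+1 < p)%N = false by lia.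
      by have -> : (m.+1 - p) = (m - p).+1 by lia.
- have fixO : forall b, b \notin O -> x b = b.
    by move=> b bO; move: (hfix b); rewrite bO /= => /negbFE/eqP.
  pose e := enum (~: O).
  have se : size e = p.
    rewrite -cardE; have := cardsC O; rewrite cO card_ord; lia.
  have eO : forall i, (i < p)%N -> nth a e i \notin O.
    by move=> i hi; rewrite -in_setC -mem_enum mem_nth // se.
  pose kf := fun m : 'I_(p.*2) => if (m < p)%N then (x ^+ m) a else nth a e (m - p).
  have kinj : injective kf.
    move=> m1 m2; rewrite /kf; case: ifP => h1; case: ifP => h2 e12; apply: val_inj => /=.
    + exact: orb_inj pp xp xa h1 h2 e12.
    + have hb : (m2 - p < p)%N by have := ltn_ord m2; lia.
      by move: (eO _ hb); rewrite -e12 memO.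
    + have hb : (m1 - p < p)%N by have := ltn_ord m1; lia.
      by move: (eO _ hb); rewrite e12 memO.
    + have h1' : (m1 - p < size e)%N by rewrite se; have := ltn_ord m1; lia.
      have h2' : (m2 - p < size e)%N by rewrite se; have := ltn_ord m2; lia.
      move/eqP: e12; rewrite nth_uniq ?enum_uniq // => /eqP; lia.
  pose k := perm kinj.
  exists k; left.
  suff e1 : k * x = x0 p * k by rewrite conjgE -e1 mulKg.
  apply/permP => m; rewrite !permM !(@permE _ kf kinj) /kf /=.
  have hv := x0E m; have hm2 := ltn_ord m; rewrite /fx0 in hv.
  case: (ltnP m p) => hm; case: (eqVneq m.+1 p) => hm1.
  + have hx : nat_of_ord (x0 p m) = 0 by rewrite [LHS]hv; arith.
    by rewrite hx p0 expg0 perm1 -step hm1 xpc.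
  + have hx : nat_of_ord (x0 p m) = m.+1 by rewrite [LHS]hv; arith.
    by rewrite hx step; have -> : (m.+1 < p)%N by lia.
  + lia.
  + have hx : x0 p m = m by apply: val_inj; rewrite /= [LHS]hv; arith.
    rewrite hx ltnNge hm /=; apply: fixO; apply: eO; lia.
Qed.

Lemma classJ_norm (gT : finGroupType) (G : {group gT}) (y k : gT) :
  G :^ k = G -> (y ^: G) :^ k = (y ^ k) ^: G.
Proof.
move=> GJ; apply/setP => z; rewrite mem_conjg.
apply/imsetP/imsetP => [[g gG e]|[g gG ->]].
  exists (g ^ k); first by rewrite -GJ memJ_conjg.
  rewrite -[z](conjgKV k) e -!conjgM; congr (y ^ _).
  by rewrite conjgE mulKVg.
exists (g ^ k^-1); first by rewrite -(memJ_conjg _ k) conjgKV GJ.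
by rewrite -!conjgM; congr (y ^ _); rewrite conjgE invgK !mulgA.
Qed.

Theorem proposition7p7 (p : nat) (G : {group {perm 'I_(p.*2)}})
    (x : {perm 'I_(p.*2)}) :
  prime p -> 5 <= p ->
  (G :=: Sym 'I_(p.*2) \/ G :=: Alt 'I_(p.*2)) ->
  x \in G -> p.-elt x -> x != 1 ->
  killing_irreducible G (x ^: G).
Proof.
move=> pp hp hG xG pel xn1.
have i0 : 'I_(p.*2) by exists 0; lia.
have xp := xp1 pp hp pel.
have GJ := GJ_lem hG.
have [k [ex|ex]] := classify pp hp xp xn1.
- have xcG : x0 p \in G by rewrite -(memJ_conjg _ k) GJ -ex.
  have := irred_conj (k:=k) (canon1 i0 pp hp hG xcG).
  by rewrite GJ (classJ_norm _ (GJ k)) -ex.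
- have xcG : x1 p \in G by rewrite -(memJ_conjg _ k) GJ -ex.
  have := irred_conj (k:=k) (canon2 i0 pp hp hG xcG).
  by rewrite GJ (classJ_norm _ (GJ k)) -ex.
Qed.
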